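(* Let $G=(V,E)$ be a $k$-cozy graph with edge connectivity $\kappa'(G)=2\ell$, and let $D\subset E$ with $|D|=2\ell$ be a set of edges whose removal disconnects $G$ into two components $G_1$ and $G_2$. Let $V_1,V_2$ be multisets of vertices, both taken from the vertex set of the same component (either $G_1$ or $G_2$), with $|V_1|=|V_2|=q\le\ell$. Then there are $q$ edge-disjoint paths in $G$ connecting $V_1$ and $V_2$ with multiplicities preserved, such that every vertex of $V_1$ and of $V_2$ is the endpoint of some such path.
   Context: An undirected graph $G$ is $k$-cozy if it is connected, $k$-regular, and equipped with a $1$-factorization, i.e., an assignment of colors from $\{1,\dots,k\}$ to its edges such that the $k$ edges incident at each vertex receive distinct colors. The edge connectivity $\kappa'(G)$ is the minimum number of edges whose removal disconnects $G$. ''Multiplicities preserved'' means a vertex appearing $m$ times in $V_1$ (resp. $V_2$) is the endpoint of $m$ of the paths. *)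

(* Defs.v *)
From mathcomp Require Import all_boot.
Set Implicit Arguments. Unset Strict Implicit. Unset Printing Implicit Defensive.

(* Simple undirected graphs on a finite vertex type T: symmetric irreflexive
   adjacency relation e. Edges are unordered pairs, represented as the
   2-element sets [set x; y]. *)
Definition simple_graph (T : finType) (e : rel T) : Prop :=
  symmetric e /\ irreflexive e.

Definition edges (T : finType) (e : rel T) : {set {set T}} :=
  [set [set x; y] | x in T, y in T & e x y].

Definition remove_edges (T : finType) (e : rel T) (F : {set {set T}}) : rel T :=
  fun x y => e x y && ([set x; y] \notin F).

Definition connected_graph (T : finType) (e : rel T) : Prop :=
  forall x y : T, connect e x y.

Definition regular (T : finType) (e : rel T) (k : nat) : Prop :=
  forall x : T, #|[set y | e x y]| = k.

(* 1-factorization: colouring of edges by k colours such that the edges at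
   every vertex receive distinct colours. *)
Definition one_factorization (T : finType) (e : rel T) (k : nat)
  (c : {set T} -> 'I_k) : Prop :=
  forall x y z : T, e x y -> e x z -> c [set x; y] = c [set x; z] -> y = z.

Definition cozy (T : finType) (e : rel T) (k : nat) : Prop :=
  [/\ simple_graph e, connected_graph e, regular e k &
      exists c : {set T} -> 'I_k, one_factorization e c].

Definition disconnecting (T : finType) (e : rel T) (F : {set {set T}}) : Prop :=
  F \subset edges e /\ ~ connected_graph (remove_edges e F).

Definition edge_connectivity (T : finType) (e : rel T) (n : nat) : Prop :=
  (exists F, disconnecting e F /\ #|F| = n) /\
  (forall F, disconnecting e F -> n <= #|F|).

Definition two_components (T : finType) (e : rel T) : Prop :=
  exists a b : T, ~~ connect e a b /\ forall x, connect e x a || connect e x b.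

Definition walk_edges (T : finType) (x : T) (p : seq T) : seq {set T} :=
  [seq [set ab.1; ab.2] | ab <- zip (x :: p) p].

Definition is_path (T : finType) (e : rel T) (x : T) (p : seq T) (y : T) : Prop :=
  [/\ path e x p, uniq (x :: p) & last x p = y].

(* Main.v *)
From Stdlib Require Import Classical.
Require Import Defs.
From mathcomp Require Import all_boot zify.
Set Implicit Arguments. Unset Strict Implicit. Unset Printing Implicit Defensive.

Definition outd (T : finType) (F : {set T * T}) (v : T) : nat := \sum_(y : T) ((v, y) \in F : nat).
Definition ind (T : finType) (F : {set T * T}) (v : T) : nat := \sum_(y : T) ((y, v) \in F : nat).

Lemma sum_ind1 (U : finType) (P Q : pred U) (b : bool) (z : U) :
  (forall y, P y = Q y || (b && (y == z))) -> ~~ (b && Q z) ->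
  \sum_(y : U) (P y : nat) = \sum_(y : U) (Q y : nat) + b.
Proof.
case: b => /= HP HQ; last by rewrite addn0; apply: eq_bigr => y _; rewrite HP orbF.
rewrite [LHS](bigD1 z) //= [X in _ = X + _](bigD1 z) //= HP eqxx orbT (negbTE HQ).
rewrite add0n addnC; congr (_ + _); apply: eq_bigr => y /negbTE yz.
by rewrite HP yz orbF.
Qed.

Lemma outd_D1 (T : finType) (F : {set T * T}) a v : a \in F ->
  outd F v = outd (F :\ a) v + (a.1 == v).
Proof.
case: a => a1 a2 aF; apply: (sum_ind1 (z := a2)); last by rewrite !inE; case: eqP => //= <-; rewrite eqxx.
move=> y; rewrite !inE /=; case: (a1 =P v) => [<-|nv] /=.
  by case: (y =P a2) => [->|]; rewrite ?aF ?orbT ?orbF //= xpair_eqE eqxx /= => /eqP ->.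
by rewrite orbF xpair_eqE; case: (v =P a1) => [E|] //; case: nv; rewrite E.
Qed.

Lemma ind_D1 (T : finType) (F : {set T * T}) a v : a \in F ->
  ind F v = ind (F :\ a) v + (a.2 == v).
Proof.
case: a => a1 a2 aF; apply: (sum_ind1 (z := a1)); last by rewrite !inE; case: eqP => //= <-; rewrite eqxx.
move=> y; rewrite !inE /=; case: (a2 =P v) => [<-|nv] /=.
  by case: (y =P a1) => [->|]; rewrite ?aF ?orbT ?orbF //= xpair_eqE eqxx /= andbT => /eqP ->.
by rewrite orbF xpair_eqE; case: (v =P a2) => [E|]; rewrite ?andbT ?andbF //; case: nv; rewrite E.
Qed.

Lemma outd_U1 (T : finType) (F : {set T * T}) a v : a \notin F ->
  outd (a |: F) v = outd F v + (a.1 == v).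
Proof.
case: a => a1 a2 aF; apply: (sum_ind1 (z := a2)).
  move=> y; rewrite !inE /= xpair_eqE orbC; case: (a1 =P v) => [<-|nv] /=; first by rewrite eqxx.
  by rewrite orbF; case: (v =P a1) => [E|_]; [case: nv; rewrite E | rewrite ?andbF ?andbT ?orbF].
by case: (a1 =P v) => //= <-.
Qed.

Lemma ind_U1 (T : finType) (F : {set T * T}) a v : a \notin F ->
  ind (a |: F) v = ind F v + (a.2 == v).
Proof.
case: a => a1 a2 aF; apply: (sum_ind1 (z := a1)).
  move=> y; rewrite !inE /= xpair_eqE orbC; case: (a2 =P v) => [<-|nv] /=; first by rewrite eqxx andbT.
  by rewrite orbF; case: (v =P a2) => [E|_]; [case: nv; rewrite E | rewrite ?andbF ?andbT ?orbF].
by case: (a2 =P v) => //= <-.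
Qed.

Definition farc (T : finType) (F : {set T * T}) : rel T := fun a b => (a, b) \in F.
Definition valid (T : finType) (e : rel T) (F : {set T * T}) : Prop :=
  forall x y, (x, y) \in F -> e x y && ((y, x) \notin F).
Definition res (T : finType) (e : rel T) (F : {set T * T}) : rel T :=
  fun x y => e x y && ((x, y) \notin F).

Fixpoint rmp (T : finType) (F : {set T * T}) (x : T) (p : seq T) : {set T * T} :=
  if p is y :: p' then rmp (F :\ (x, y)) y p' else F.

Lemma rmpE (T : finType) (F : {set T * T}) x p z :
  (z \in rmp F x p) = (z \in F) && (z \notin zip (x :: p) p).
Proof.
elim: p x F => [|y p IH] x F /=; first by rewrite andbT.
by rewrite IH in_setD1 in_cons negb_or; case: (z == (x, y)); case: (z \in F); case: (z \in zip _ _).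
Qed.

Lemma valid_sub (T : finType) (e : rel T) (F G : {set T * T}) :
  valid e F -> (forall z, z \in G -> z \in F) -> valid e G.
Proof.
move=> vF sGF x y /sGF /vF /andP[-> H] /=; apply/negP => /sGF; by rewrite (negbTE H).
Qed.

Lemma rmp_deg (T : finType) (F : {set T * T}) x p :
  path (farc F) x p -> uniq (x :: p) -> forall u,
  outd (rmp F x p) u + ind F u + (u == x) = ind (rmp F x p) u + outd F u + (u == last x p).
Proof.
elim: p x F => [|y p IH] x F /=; first by move=> _ _ u; lia.
move=> /andP[xy pth] /andP[xn un] u.
have pth1 : path (farc (F :\ (x, y))) y p.
  apply: (sub_in_path (P := predC1 x)) pth.
    move=> a b /= ax _ ab; rewrite /farc !inE; rewrite /farc in ab; rewrite ab andbT xpair_eqE.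
    by rewrite (negbTE ax).
  apply/allP => z zin /=; apply/eqP => zx; move: xn; by rewrite -zx zin.
have := IH _ _ pth1 un u.
have := outd_D1 u xy; have := ind_D1 u xy; rewrite /= (eq_sym x u) (eq_sym y u).
move=> H1 H2 H3; rewrite H1 H2; move: H3; set F1 := (F :\ (x, y)); lia.
Qed.

Definition flip (T : finType) (F : {set T * T}) (x y : T) : {set T * T} :=
  if (y, x) \in F then F :\ (y, x) else (x, y) |: F.

Fixpoint aug (T : finType) (F : {set T * T}) (x : T) (p : seq T) : {set T * T} :=
  if p is y :: p' then aug (flip F x y) y p' else F.

Lemma flipE (T : finType) (F : {set T * T}) x y a b : a != x -> b != x ->
  ((a, b) \in flip F x y) = ((a, b) \in F).
Proof.
move=> ax bx; rewrite /flip; case: ifP => _; rewrite !inE xpair_eqE.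
  by rewrite (negbTE bx) andbF.
by rewrite (negbTE ax).
Qed.

Lemma flip_ok (T : finType) (e : rel T) (F : {set T * T}) x y :
  symmetric e -> irreflexive e -> valid e F -> res e F x y ->
  valid e (flip F x y) /\ forall u,
  outd (flip F x y) u + ind F u + (u == y) = ind (flip F x y) u + outd F u + (u == x).
Proof.
move=> sym irr vF /andP[exy nxy]; rewrite /flip; case: ifP => yx.
  split; first by apply: (valid_sub vF) => z; rewrite inE => /andP[].
  move=> u; have := outd_D1 u yx; have := ind_D1 u yx; rewrite /= (eq_sym x u) (eq_sym y u); set G := F :\ (y, x); lia.
split; last first.
  move=> u; have := outd_U1 u nxy; have := ind_U1 u nxy; rewrite /= (eq_sym x u) (eq_sym y u); set G := (x, y) |: F; lia.
move=> a b; rewrite !inE xpair_eqE; case/orP.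
  case/andP => /eqP -> /eqP ->; rewrite exy /= xpair_eqE yx orbF.
  by apply/negP => /andP[/eqP E _]; move: exy; rewrite E irr.
move=> ab; have /andP[-> ba] := vF _ _ ab; rewrite /= (negbTE ba) orbF xpair_eqE.
by apply/negP => /andP[/eqP E1 /eqP E2]; move: ab yx; rewrite E1 E2 => ->.
Qed.

Lemma aug_ok (T : finType) (e : rel T) (F : {set T * T}) x p :
  symmetric e -> irreflexive e -> valid e F -> path (res e F) x p -> uniq (x :: p) ->
  valid e (aug F x p) /\ forall u,
  outd (aug F x p) u + ind F u + (u == last x p) = ind (aug F x p) u + outd F u + (u == x).
Proof.
move=> sym irr; elim: p x F => [|y p IH] x F /=; first by move=> vF _ _; split => // u; lia.
move=> vF /andP[xy pth] /andP[xn un].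
have [v1 d1] := flip_ok sym irr vF xy.
have pth1 : path (res e (flip F x y)) y p.
  apply: (sub_in_path (P := predC1 x)) pth.
    by move=> a b /= ax bx; rewrite /res flipE.
  apply/allP => z zin /=; apply/eqP => zx; move: xn; by rewrite -zx zin.
have [v2 d2] := IH _ _ v1 pth1 un; split => // u.
have := d1 u; have := d2 u; lia.
Qed.

Definition bal (T : finType) (F : {set T * T}) (A B : seq T) : Prop :=
  forall v, outd F v + count_mem v B = ind F v + count_mem v A.

Lemma sum_outd_ind (T : finType) (F : {set T * T}) :
  \sum_(v : T) outd F v = \sum_(v : T) ind F v.
Proof. exact: exchange_big. Qed.

Lemma sum_count (T : finType) (A : seq T) : \sum_(v : T) count_mem v A = size A.
Proof.
elim: A => [|a A IH] /=; first by rewrite big1.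
rewrite big_split /= IH (bigD1 a) //= eqxx big1 // => v /negbTE.
by rewrite eq_sym => ->.
Qed.

Lemma sum_lt (U : finType) (P : pred U) (f g : U -> nat) v : P v ->
  (forall u, P u -> f u <= g u) -> f v < g v ->
  \sum_(u | P u) f u < \sum_(u | P u) g u.
Proof.
move=> Pv Hle Hlt; rewrite (bigD1 v) //= [X in _ < X](bigD1 v) //=.
have : \sum_(i | P i && (i != v)) f i <= \sum_(i | P i && (i != v)) g i.
  by apply: leq_sum => u /andP[Pu _]; apply: Hle.
lia.
Qed.

Lemma cut_bound (T : finType) (e : rel T) n (S : {set T}) v y :
  symmetric e -> (forall F, disconnecting e F -> n <= #|F|) -> v \in S -> y \notin S ->
  n <= \sum_(w in S) \sum_(z | z \notin S) (e w z : nat).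
Proof.
move=> sym Hc vS yS.
pose DS := [set p : T * T | (p.1 \in S) && (p.2 \notin S) && e p.1 p.2].
pose FS := [set [set p.1; p.2] | p in DS].
have cardDS : #|DS| = \sum_(w in S) \sum_(z | z \notin S) (e w z : nat).
  rewrite pair_big /= -sum1_card big_mkcond [RHS]big_mkcond /=.
  apply: eq_bigr => p _; rewrite inE.
  by case: (p.1 \in S); case: (p.2 \in S); case: (e _ _).
have disc : disconnecting e FS.
  split.
    apply/subsetP => E /imsetP [p pin ->]; move: pin; rewrite inE => /andP[_ ep].
    by apply/imset2P; exists p.1 p.2; rewrite ?inE.
  move=> conn; have := conn v y.
  have cl : closed (remove_edges e FS) [pred w | w \in S].
    move=> a b /andP[eab nin]; rewrite /= !inE.
    case aS: (a \in S); case bS: (b \in S) => //; move/negP: nin; case.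
      by apply/imsetP; exists (a, b) => //; rewrite inE aS bS eab.
    apply/imsetP; exists (b, a); first by rewrite inE aS bS sym eab.
    by rewrite /= setUC.
  move/(closed_connect cl); by rewrite /= vS (negbTE yS).
have := Hc _ disc; have := leq_imset_card (fun p : T * T => [set p.1; p.2]) DS.
rewrite -/FS cardDS => h1 h2; exact: leq_trans h2 h1.
Qed.

Lemma no_stuck (T : finType) (e : rel T) n (F : {set T * T}) (A B : seq T) v :
  symmetric e -> (forall F, disconnecting e F -> n <= #|F|) -> size A <= n ->
  size A = size B -> valid e F ->
  outd F v + count_mem v B < ind F v + count_mem v A ->
  exists w, connect (res e F) v w /\ ind F w + count_mem w A < outd F w + count_mem w B.
Proof.
move=> sym Hc sA sAB vF lt.
case: (boolP [exists w, connect (res e F) v w &&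
   (ind F w + count_mem w A < outd F w + count_mem w B)]).
  by case/existsP => w /andP[? ?]; exists w.
rewrite negb_exists => /forallP H; exfalso.
pose S := [set w | connect (res e F) v w].
have vS : v \in S by rewrite inE connect0.
have HS : forall w, w \in S -> outd F w + count_mem w B <= ind F w + count_mem w A.
  move=> w; rewrite inE => cw; have := H w; by rewrite cw /= -leqNgt.
have clS : forall w z, w \in S -> res e F w z -> z \in S.
  move=> w z; rewrite !inE => cw rz; apply: connect_trans cw (connect1 rz).
have Hlt : \sum_(w in S) (outd F w + count_mem w B) < \sum_(w in S) (ind F w + count_mem w A).
  by apply: sum_lt vS HS lt.
rewrite !big_split /= in Hlt.
have Eout : \sum_(w in S) outd F w = \sum_(w in S) \sum_(z in S) ((w, z) \in F : nat)
   + \sum_(w in S) \sum_(z | z \notin S) (e w z : nat).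
  rewrite -big_split; apply: eq_bigr => w wS; rewrite /outd (bigID (mem S)) /=.
  congr (_ + _); apply: eq_bigr => z zS.
  case wz: ((w, z) \in F); first by have /andP[-> _] := vF _ _ wz.
  case ewz: (e w z) => //; have := clS w z wS; rewrite /res ewz wz => /(_ isT).
  by rewrite (negbTE zS).
have Ein : \sum_(w in S) ind F w = \sum_(w in S) \sum_(z in S) ((z, w) \in F : nat).
  apply: eq_bigr => w wS; rewrite /ind (bigID (mem S)) /= [X in _ + X]big1 ?addn0 // => z zS.
  case zw: ((z, w) \in F) => //; have /andP[ezw nwz] := vF _ _ zw.
  have := clS w z wS; rewrite /res sym ezw nwz => /(_ isT).
  by rewrite (negbTE zS).
have Ex : \sum_(w in S) \sum_(z in S) ((w, z) \in F : nat) =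
          \sum_(w in S) \sum_(z in S) ((z, w) \in F : nat) by exact: exchange_big.
have leA : \sum_(w in S) count_mem w A <= size A.
  by rewrite -(sum_count A) [X in _ <= X](bigID (mem S)) /= leq_addr.
rewrite Eout Ein Ex in Hlt.
case: (boolP [exists y, y \notin S]).
  case/existsP => y yS; have := cut_bound sym Hc vS yS; move=> H1; move: Hlt leA H1 sA; set d2 := \sum_(w in S) \sum_(z | z \notin S) (e w z : nat); set cA := \sum_(w in S) count_mem w A; set X := \sum_(w in S) \sum_(z in S) ((z, w) \in F : nat); clearbody d2 cA X; lia.
rewrite negb_exists => /forallP allS.
have eqA : \sum_(w in S) count_mem w A = size A.
  by rewrite -(sum_count A); apply: eq_bigl => w; have := allS w; rewrite negbK.
have eqB : \sum_(w in S) count_mem w B = size B.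
  by rewrite -(sum_count B); apply: eq_bigl => w; have := allS w; rewrite negbK.
move: Hlt eqA eqB sAB; set d2 := \sum_(w in S) \sum_(z | z \notin S) (e w z : nat); set cA := \sum_(w in S) count_mem w A; set cB := \sum_(w in S) count_mem w B; set X := \sum_(w in S) \sum_(z in S) ((z, w) \in F : nat); clearbody d2 cA cB X; lia.
Qed.

Definition phi (T : finType) (F : {set T * T}) (A B : seq T) : nat :=
  \sum_(v : T) ((ind F v + count_mem v A) - (outd F v + count_mem v B)).

Lemma phi0_bal (T : finType) (F : {set T * T}) (A B : seq T) :
  size A = size B -> phi F A B = 0 -> bal F A B.
Proof.
move=> sAB /eqP; rewrite sum_nat_eq0 => /forallP H0 v.
have Hle : forall u, ind F u + count_mem u A <= outd F u + count_mem u B.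
  by move=> u; have := H0 u; rewrite /= subn_eq0.
apply/eqP; rewrite eqn_leq Hle andbT leqNgt; apply/negP => lt.
have := sum_lt (P := predT) (f := fun u => ind F u + count_mem u A)
  (g := fun u => outd F u + count_mem u B) (v := v) isT (fun u _ => Hle u) lt.
rewrite !big_split /= sum_outd_ind !sum_count sAB; lia.
Qed.

Lemma phi_dec (T : finType) (e : rel T) n (F : {set T * T}) (A B : seq T) :
  symmetric e -> irreflexive e -> (forall F, disconnecting e F -> n <= #|F|) ->
  size A <= n -> size A = size B -> valid e F -> 0 < phi F A B ->
  exists F', valid e F' /\ phi F' A B < phi F A B.
Proof.
move=> sym irr Hc sA sAB vF pos.
case: (boolP [exists v, 0 < (ind F v + count_mem v A) - (outd F v + count_mem v B)]);
  last first.
  rewrite negb_exists => /forallP H; move: pos; rewrite /phi big1 // => v _.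
  by have := H v; rewrite lt0n negbK => /eqP.
case/existsP => v; rewrite subn_gt0 => ltv.
have [w [cw ltw]] := no_stuck sym Hc sA sAB vF ltv.
case/connectP: cw => p pth wE; rewrite wE {w wE} in ltw.
move: ltw; case: (shortenP pth) => p' pth' un' _ ltw.
have [vF' deg] := aug_ok sym irr vF pth' un'.
exists (aug F v p'); split => //.
have vw : (v == last v p') = false.
  by apply/negbTE/eqP => E; move: ltw; rewrite -E; lia.
rewrite /phi; apply: (sum_lt (v := v)) => //.
  move=> u _; have := deg u; set F' := aug F v p'; set w := last v p'.
  clearbody F'; case: (eqVneq u v) => [->|nuv].
    rewrite /w vw; lia.
  case: (eqVneq u w) => [->|nuw].
    move: ltw; rewrite -/w; clearbody w; lia.
  lia.
have := deg v; set F' := aug F v p'; clearbody F'; rewrite eqxx vw; lia.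
Qed.

Lemma exists_bal (T : finType) (e : rel T) n (A B : seq T) :
  symmetric e -> irreflexive e -> (forall F, disconnecting e F -> n <= #|F|) ->
  size A <= n -> size A = size B -> exists F, valid e F /\ bal F A B.
Proof.
move=> sym irr Hc sA sAB.
suff: forall m F, valid e F -> phi F A B <= m -> exists F, valid e F /\ bal F A B.
  by move/(_ _ set0 _ (leqnn _)); apply => x y; rewrite inE.
elim=> [|m IH] F vF le.
  by exists F; split => //; apply: phi0_bal => //; lia.
case: (posnP (phi F A B)) => [z|pos]; first by exists F; split => //; apply: phi0_bal.
have [F' [vF' lt]] := phi_dec sym irr Hc sA sAB vF pos.
apply: (IH F') => //; lia.
Qed.

Definition acyclic (T : finType) (F : {set T * T}) : Prop :=
  forall x p, path (farc F) x p -> uniq (x :: p) -> (last x p, x) \notin F.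

Lemma zip_snd (T : eqType) (x : T) p z : z \in zip (x :: p) p -> z.2 \in p.
Proof.
elim: p x => [|y p IH] x //= zin; rewrite in_cons; move: zin.
rewrite in_cons => /orP[/eqP -> | /IH ->]; by rewrite ?eqxx ?orbT.
Qed.

Lemma path_zip (T : finType) (F : {set T * T}) x p :
  path (farc F) x p -> forall z, z \in zip (x :: p) p -> z \in F.
Proof.
elim: p x => [|y p IH] x //= /andP[xy pth] z; rewrite in_cons => /orP[/eqP ->|] //.
exact: IH.
Qed.

Lemma step_acyc (T : finType) (e : rel T) (F : {set T * T}) (A B : seq T) :
  irreflexive e -> valid e F -> bal F A B -> ~ acyclic F ->
  exists F2, [/\ valid e F2, bal F2 A B & #|F2| < #|F|].
Proof.
move=> irr vF bF nac.
have [x [p [pth [un inF]]]] :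
    exists x p, [/\ path (farc F) x p, uniq (x :: p) & (last x p, x) \in F].
  apply: NNPP => H; apply: nac => x p pth un; apply/negP => inF; apply: H.
  by exists x, p.
have xnp : x \notin p by case/andP: un.
set u := last x p.
have uxF1 : (u, x) \in rmp F x p.
  rewrite rmpE inF /=; apply/negP => /zip_snd /=; by rewrite (negbTE xnp).
pose F1 := rmp F x p.
have deg := rmp_deg pth un.
exists (F1 :\ (u, x)); split.
- apply: (valid_sub vF) => z; rewrite inE rmpE => /andP[_ /andP[]] //.
- move=> v; have := deg v; have := outd_D1 v uxF1; have := ind_D1 v uxF1.
  have := bF v; rewrite /= -/u -/F1 (eq_sym u v) (eq_sym x v).
  set G := F1 :\ (u, x); clearbody G; lia.
- have c2 : #|F1| <= #|F|.
    by apply: subset_leq_card; apply/subsetP => z; rewrite rmpE => /andP[].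
  have c1 := cardsD1 (u, x) F1; rewrite uxF1 in c1.
  move: c1 c2; set G := F1 :\ (u, x); clearbody G; rewrite -/F1; move: #|F1| #|G| #|F| => a b c; rewrite /nat_of_bool; lia.
Qed.

Lemma exists_acyc (T : finType) (e : rel T) (F : {set T * T}) (A B : seq T) :
  irreflexive e -> valid e F -> bal F A B ->
  exists F', [/\ valid e F', bal F' A B & acyclic F'].
Proof.
move=> irr; move: {2}#|F| (leqnn #|F|) => m; elim: m F => [|m IH] F le vF bF;
  (case: (classic (acyclic F)) => [ac|nac]; first by exists F);
  have [F2 [vF2 bF2 lt]] := step_acyc irr vF bF nac.
  lia.
apply: (IH F2) => //; lia.
Qed.

Lemma max_path (T : finType) (F : {set T * T}) a :
  exists p, [/\ path (farc F) a p, uniq (a :: p) &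
    forall w, (last a p, w) \in F -> w \in a :: p].
Proof.
suff H : forall n p, #|T| - size p <= n -> path (farc F) a p -> uniq (a :: p) ->
  exists p, [/\ path (farc F) a p, uniq (a :: p) &
    forall w, (last a p, w) \in F -> w \in a :: p].
  by apply: (H _ [::] (leqnn _)).
move=> n; elim: n => [|n IH] p le pth un.
all: case: (boolP [exists w, ((last a p, w) \in F) && (w \notin a :: p)]); last first.
1,3: by rewrite negb_exists => /forallP Hn; exists p; split => // w lw;
     apply/negPn/negP => nw; have := Hn w; rewrite lw nw.
all: case/existsP => w /andP[lw nw].
all: have un' : uniq (a :: rcons p w) by rewrite -rcons_cons rcons_uniq nw un.
all: have := max_card (mem (a :: rcons p w)); rewrite (card_uniqP un') /= size_rcons => sz.
  move: le; rewrite leqn0 subn_eq0 => le; have := leq_trans sz le; lia.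
apply: (IH (rcons p w)); rewrite ?size_rcons ?rcons_path ?pth ?lw //; move: le sz; set c := #|T|; clearbody c; lia.
Qed.

Lemma cycle_split (T : finType) (F : {set T * T}) a p w :
  w \in a :: p -> path (farc F) a p -> uniq (a :: p) ->
  exists s, [/\ path (farc F) w s, uniq (w :: s) & last w s = last a p].
Proof.
rewrite in_cons => /orP[/eqP -> pth un|wp]; first by exists p.
case/splitPr: wp => p1 p2 pth un.
move: un; rewrite -cat_cons cat_uniq => /and3P[_ _ un2].
move: pth; rewrite cat_path => /andP[_ /= /andP[_ pth2]].
by exists p2; rewrite last_cat.
Qed.

Lemma count_rem_split (T : eqType) (u v : T) (B : seq T) : u \in B ->
  count_mem v B = (u == v) + count_mem v (rem u B).
Proof. by move=> uB; rewrite (permP (perm_to_rem uB) (pred1 v)). Qed.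

Lemma perm_rem_cons (T : eqType) (u : T) (s B : seq T) : u \in B ->
  perm_eq s (rem u B) -> perm_eq (u :: s) B.
Proof.
move=> uB ps; apply: (perm_trans (y := u :: rem u B)); last by rewrite perm_sym perm_to_rem.
by rewrite perm_cons.
Qed.

Lemma decomp (T : finType) (e : rel T) (x0 : T) (A : seq T) :
  forall (B : seq T) (F : {set T * T}), valid e F -> acyclic F -> bal F A B ->
  exists (ends : seq T) (P : nat -> seq T),
   [/\ perm_eq ends B, size ends = size A,
    forall i, i < size A -> is_path e (nth x0 A i) (P i) (nth x0 ends i),
    forall i, i < size A -> path (farc F) (nth x0 A i) (P i) &
    forall i j, i < size A -> j < size A -> i != j ->
      forall z, z \in zip (nth x0 A i :: P i) (P i) ->
        z \notin zip (nth x0 A j :: P j) (P j)].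
Proof.
elim: A => [|a A IH] B F vF ac bF.
  have : \sum_(v : T) (outd F v + count_mem v B) = \sum_(v : T) (ind F v + count_mem v [::]).
    by apply: eq_bigr => v _; exact: bF v.
  rewrite !big_split /= sum_outd_ind !sum_count /= => H.
  have /size0nil -> : size B = 0 by move: H; rewrite big1_eq addn0 => /eqP; rewrite -[X in _ == X]addn0 eqn_add2l => /eqP.
  by exists [::], (fun _ => [::]); split.
have vsub : forall G : {set T * T}, (forall z, z \in G -> z \in F) ->
    valid e G /\ acyclic G.
  move=> G sGF; split; first exact: valid_sub vF sGF.
  move=> x p pth un; apply/negP => /sGF; apply/negP; apply: ac => //.
  by apply: sub_path pth => c d /sGF.
have epath : forall x p, path (farc F) x p -> path e x p.
  by move=> x p; apply: sub_path => c d /vF /andP[].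
case aB: (a \in B).
  have bF' : bal F A (rem a B).
    move=> v; have := bF v; rewrite (count_rem_split v aB) /=; lia.
  have [ends [P [pe se ip pp dj]]] := IH _ _ vF ac bF'.
  exists (a :: ends), (fun i => if i is i'.+1 then P i' else [::]); split => /=.
  - exact: perm_rem_cons.
  - by rewrite se.
  - case=> [|i] /= lt; first by split.
    exact: ip.
  - case=> [|i] //= lt; exact: pp.
  case=> [|i] [|j] //= ? ? ij z; rewrite ?in_nil //.
  by apply: dj.
have aB0 : count_mem a B = 0 by apply/count_memPn; rewrite aB.
have outa : 0 < outd F a by have := bF a; rewrite aB0 /= eqxx; lia.
have [p [pth un mx]] := max_path F a.
set u := last a p.
have outu : outd F u = 0.
  rewrite /outd big1 // => w _; case uw: ((u, w) \in F) => //.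
  have [s [pths uns ls]] := cycle_split (mx w uw) pth un.
  by have := ac w s pths uns; rewrite ls -/u uw.
have indu : 0 < ind F u.
  move: outu pth; rewrite /u; case/lastP: p {mx un u} => [|p0 u'].
    by move=> /= o; move: outa; rewrite o.
  rewrite last_rcons rcons_path => _ /andP[_ lu].
  rewrite /ind (bigD1 (last a p0)) //=; move: lu; rewrite /farc => ->; lia.
have uB : u \in B.
  apply/negPn/negP => /count_memPn c0; have := bF u; rewrite outu c0; lia.
pose F' := rmp F a p.
have deg := rmp_deg pth un.
have sF' : forall z, z \in F' -> z \in F by move=> z; rewrite rmpE => /andP[].
have [vF' ac'] := vsub F' sF'.
have bF' : bal F' A (rem u B).
  move=> v; have := deg v; have := bF v; rewrite (count_rem_split v uB) /= -/u -/F'.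
  rewrite (eq_sym v a) (eq_sym v u); clearbody F'; lia.
have [ends [P [pe se ip pp dj]]] := IH _ _ vF' ac' bF'.
have notF' : forall z, z \in zip (a :: p) p -> z \notin F'.
  by move=> z zin; rewrite rmpE zin andbF.
exists (u :: ends), (fun i => if i is i'.+1 then P i' else p); split => /=.
- exact: perm_rem_cons.
- by rewrite se.
- case=> [|i] /=; first by move=> _; split => //; apply: epath.
  move=> lt; exact: ip.
- case=> [|i] //= lt; apply: sub_path (pp _ lt) => c d; exact: sF'.
case=> [|i] [|j] //= ? ? ij z.
- move=> zin; apply/negP => /(path_zip (pp _ _)) zF; move: (notF' _ zin).
  by move=> H; rewrite zF in H.
- move=> /(path_zip (pp _ _)) zF; apply/negP => zin; move: (notF' _ zin).
  by move=> H; rewrite zF in H.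
- by apply: dj.
Qed.

Lemma set2_inv (T : finType) (a b c d : T) : [set a; b] = [set c; d] ->
  (a = c /\ b = d) \/ (a = d /\ b = c).
Proof.
move=> E.
have ha : a \in [set c; d] by rewrite -E !inE eqxx.
have hb : b \in [set c; d] by rewrite -E !inE eqxx orbT.
have hc : c \in [set a; b] by rewrite E !inE eqxx.
have hd : d \in [set a; b] by rewrite E !inE eqxx orbT.
move: ha hb hc hd; rewrite !inE.
do 4 (case/orP => /eqP ?); subst; first [by left | by right].
Qed.

Theorem mainTheorem13 (T : finType) (e : rel T) (k l q : nat)
  (D : {set {set T}}) (V1 V2 : q.-tuple T) :
  cozy e k ->
  edge_connectivity e (2 * l) ->
  D \subset edges e -> #|D| = 2 * l ->
  two_components (remove_edges e D) ->
  (forall x y, x \in (V1 : seq T) ++ V2 -> y \in (V1 : seq T) ++ V2 ->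
     connect (remove_edges e D) x y) ->
  q <= l ->
  exists (ends : q.-tuple T) (P : 'I_q -> seq T),
    [/\ perm_eq ends V2,
        (forall i, is_path e (tnth V1 i) (P i) (tnth ends i)) &
        (forall i j, i != j ->
           all (fun f => f \notin walk_edges (tnth V1 j) (P j))
               (walk_edges (tnth V1 i) (P i)))].
Proof.
move=> [[sym irr] _ _ _] [_ Hc] _ _ _ _.
case: q V1 V2 => [|q] V1 V2 ql.
  by exists V2, (fun _ => [::]); split => // -[].
pose x0 := tnth V1 ord0.
have sA : size V1 <= 2 * l by rewrite size_tuple; lia.
have sAB : size V1 = size V2 by rewrite !size_tuple.
have [F [vF bF]] := exists_bal sym irr Hc sA sAB.
have [F' [vF' bF' ac]] := exists_acyc irr vF bF.
have [ends [P [pe se ip pp dj]]] := decomp x0 vF' ac bF'.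
have se' : size ends == q.+1 by rewrite se size_tuple.
exists (Tuple se'), (fun i => P i); split.
- exact: pe.
- move=> i; rewrite (tnth_nth x0) (tnth_nth x0) /=; apply: ip.
  by rewrite size_tuple ltn_ord.
move=> i j ij; rewrite !(tnth_nth x0).
have iA : i < size V1 by rewrite size_tuple ltn_ord.
have jA : j < size V1 by rewrite size_tuple ltn_ord.
apply/allP => E; rewrite /walk_edges => /mapP [z zi ->].
apply/negP => /mapP [z' zj Ez].
have zF := path_zip (pp _ iA) zi.
have z'F := path_zip (pp _ jA) zj.
case: (set2_inv Ez) => [[E1 E2]|[E1 E2]].
  have zz : z = z' by move: E1 E2; case: z {zi zF Ez} => ? ? /= -> ->; rewrite -surjective_pairing.
  by move: (dj _ _ iA jA ij z zi); rewrite zz zj.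
have z'F2 : (z'.1, z'.2) \in F' by rewrite -surjective_pairing.
have /andP[_ nz] := vF' _ _ z'F2.
by move: nz; rewrite -E1 -E2 -surjective_pairing zF.
Qed.
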